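(* Let $\mathcal{F}$ be an argumentation framework and $S\subseteq A_{\mathcal{F}}$. Then $S\in\mathit{tfstg2}(\mathcal{F})$ if and only if $S$ is conflict-free and $S$ is a stage extension of $[[\mathcal{F}\setminus\Delta_{\mathcal{F},S}]]$.
   Context: An argumentation framework (AF) is $\mathcal{F}=(A_{\mathcal{F}},R_{\mathcal{F}})$ with $R_{\mathcal{F}}\subseteq A_{\mathcal{F}}\times A_{\mathcal{F}}$; $a\rightarrow b$ means $(a,b)\in R_{\mathcal{F}}$. $\mathcal{F}|_B=(A_{\mathcal{F}}\cap B,R_{\mathcal{F}}\cap(B\times B))$. Conflict-free: no $a,b\in S$ with $a\rightarrow b$; $S^\oplus=S\cup\{x:\exists y\in S,\ y\rightarrow x\}$; stage extension: conflict-free $S$ with no conflict-free $T$ such that $S^\oplus\subsetneq T^\oplus$. $\mathrm{SCC}(a)$: set of $b$ with directed attack paths (possibly length 0) from $a$ to $b$ and back. $D_S(X)=\{b\in X:\exists a\in S\setminus X,\ a\rightarrow b\}$. $\mathit{tfstg2}$: $C^0_S(a)=\mathrm{SCC}(a)$; $C^{\alpha+1}_S(a)$ = the strongly connected component of $a$ in $\mathcal{F}|_{C^\alpha_S(a)\setminus D_S(C^\alpha_S(a))}$ (empty if $a$ is not in that set); for limit $\lambda$, $C^\lambda_S(a)$ = the component of $a$ in $\mathcal{F}|_{\bigcap_{\alpha<\lambda}C^\alpha_S(a)}$; $\alpha_S(a)$ = least $\alpha$ with $a\notin C^\alpha_S(a)$ or $C^{\alpha+1}_S(a)=C^\alpha_S(a)$.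 $S\in\mathit{tfstg2}(\mathcal{F})$ iff $S$ is conflict-free and for each $a\in A_{\mathcal{F}}$, either $a\notin C^{\alpha_S(a)}_S(a)$ or $S\cap C^{\alpha_S(a)}_S(a)$ is a stage extension of $\mathcal{F}|_{C^{\alpha_S(a)}_S(a)}$. $a\Rightarrow^B_{\mathcal{F}}b$ means there is a directed attack path from $a$ to $b$ in $\mathcal{F}|_B$. For $D\subseteq A_{\mathcal{F}}$, $\Delta_{\mathcal{F},S}(D)=\{a\in A_{\mathcal{F}}:\exists b\in S\,(b\rightarrow a\text{ and not }a\Rightarrow^{A_{\mathcal{F}}\setminus D}_{\mathcal{F}}b)\}$. This operator is monotone; $\Delta_{\mathcal{F},S}$ (as a set) denotes its least fixed point. $\mathcal{F}\setminus\Delta$ denotes $\mathcal{F}|_{A_{\mathcal{F}}\setminus\Delta}$. For an AF $\mathcal{G}$, $[[\mathcal{G}]]$ is obtained by deleting all attacks between arguments in different strongly connected components of $\mathcal{G}$. *)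

(* Defs.v *)
(* Argumentation frameworks over an arbitrary (possibly
   infinite) carrier type [A] with attack relation [R]; sub-frameworks
   F|_B are represented by a carrier predicate [B] together with [R]
   (attacks of F|_B are those of R between members of B). *)
From Stdlib Require Import Relations.

Section AF.
Variable A : Type.

Definition aset := A -> Prop.

Definition subset (P Q : aset) : Prop := forall x, P x -> Q x.
Definition strict_subset (P Q : aset) : Prop :=
  subset P Q /\ exists x, Q x /\ ~ P x.
Definition set_eq (P Q : aset) : Prop := forall x, P x <-> Q x.

Definition edge (B : aset) (R : A -> A -> Prop) (x y : A) : Prop :=
  B x /\ B y /\ R x y.

Definition reach (B : aset) (R : A -> A -> Prop) (a b : A) : Prop :=
  B a /\ clos_refl_trans A (edge B R) a b.

(* strongly connected component of a in F|_B (empty if a is not in B) *)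
Definition scc (B : aset) (R : A -> A -> Prop) (a : A) : aset :=
  fun b => reach B R a b /\ reach B R b a.

Definition conflict_free (R : A -> A -> Prop) (S : aset) : Prop :=
  forall x y, S x -> S y -> ~ R x y.

Definition range (B : aset) (R : A -> A -> Prop) (S : aset) : aset :=
  fun x => S x \/ exists y, S y /\ edge B R y x.

Definition stage (B : aset) (R : A -> A -> Prop) (S : aset) : Prop :=
  subset S B /\ conflict_free R S /\
  ~ (exists T, subset T B /\ conflict_free R T /\
               strict_subset (range B R S) (range B R T)).

Definition Dset (R : A -> A -> Prop) (S X : aset) : aset :=
  fun b => X b /\ exists a, S a /\ ~ X a /\ R a b.

Definition cstep (R : A -> A -> Prop) (S : aset) (a : A) (X : aset) : aset :=
  scc (fun x => X x /\ ~ Dset R S X x) R a.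

(* A transfinite sequence C^alpha_S(a) for alpha <= alpha_S(a), indexed by a
   well-ordered type (I, lt) with greatest element t (playing alpha_S(a)). *)
Definition cseq (R : A -> A -> Prop) (S : aset) (a : A)
  (I : Type) (lt : I -> I -> Prop) (c : I -> aset) (t : I) : Prop :=
  well_founded lt /\
  (forall i j k, lt i j -> lt j k -> lt i k) /\
  (forall i j, lt i j \/ i = j \/ lt j i) /\
  (forall i, i = t \/ lt i t) /\
  (forall i, (forall j, ~ lt j i) -> set_eq (c i) (scc (fun _ => True) R a)) /\
  (forall i j, lt j i -> (forall k, lt k i -> k = j \/ lt k j) ->
     set_eq (c i) (cstep R S a (c j))) /\
  (forall i, (exists j, lt j i) ->
     (forall j, lt j i -> exists k, lt j k /\ lt k i) ->
     set_eq (c i) (scc (fun x => forall j, lt j i -> c j x) R a)) /\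
  (* t is the least index at which a drops out or the sequence stabilises *)
  (~ c t a \/ set_eq (cstep R S a (c t)) (c t)) /\
  (forall i, lt i t -> c i a /\ ~ set_eq (cstep R S a (c i)) (c i)).

Definition tfstg2 (R : A -> A -> Prop) (S : aset) : Prop :=
  conflict_free R S /\
  forall a (I : Type) (lt : I -> I -> Prop) (c : I -> aset) (t : I),
    cseq R S a I lt c t ->
    ~ c t a \/ stage (c t) R (fun x => S x /\ c t x).

Definition DeltaOp (R : A -> A -> Prop) (S : aset) (D : aset) : aset :=
  fun x => exists b, S b /\ R b x /\ ~ reach (fun y => ~ D y) R x b.

(* its least fixed point (Knaster-Tarski: intersection of all prefixed
   points; DeltaOp is monotone) *)
Definition Delta (R : A -> A -> Prop) (S : aset) : aset :=
  fun x => forall D, subset (DeltaOp R S D) D -> D x.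

(* [[F \ Delta]]: carrier A \ Delta, attacks only inside SCCs of F \ Delta *)
Definition FminusDelta (R : A -> A -> Prop) (S : aset) : aset :=
  fun x => ~ Delta R S x.

Definition sccRestrict (B : aset) (R : A -> A -> Prop) : A -> A -> Prop :=
  fun x y => R x y /\ scc B R x y.

End AF.

Arguments subset {A}. Arguments strict_subset {A}. Arguments set_eq {A}.
Arguments edge {A}. Arguments reach {A}. Arguments scc {A}.
Arguments conflict_free {A}. Arguments range {A}. Arguments stage {A}.
Arguments Dset {A}. Arguments cstep {A}. Arguments cseq {A}.
Arguments tfstg2 {A}. Arguments DeltaOp {A}. Arguments Delta {A}.
Arguments FminusDelta {A}. Arguments sccRestrict {A}.

(* Main.v *)
Require Import Defs.
From Stdlib Require Import Relations Classical FunctionalExtensionality PropExtensionality ProofIrrelevance.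

Lemma set_ext {A} (P Q : aset A) : (forall x, P x <-> Q x) -> P = Q.
Proof. intro H; apply functional_extensionality; intro x; apply propositional_extensionality; auto. Qed.

Lemma sub_antisym {A} (P Q : aset A) : subset P Q -> subset Q P -> P = Q.
Proof. intros; apply set_ext; split; auto. Qed.

Lemma reach_refl {A} B R (a : A) : B a -> reach B R a a.
Proof. split; [auto| apply rt_refl]. Qed.

Lemma reach_trans {A} B R (a b c : A) : reach B R a b -> reach B R b c -> reach B R a c.
Proof. intros [h1 h2] [h3 h4]; split; auto; eapply rt_trans; eauto. Qed.

Lemma rt_end {A} B R (a b : A) : B a -> clos_refl_trans A (edge B R) a b -> B b.
Proof. intros Ha H; induction H; auto. destruct H as [_ [h _]]; auto. Qed.

Lemma reach_end {A} B R (a b : A) : reach B R a b -> B b.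
Proof. intros [h1 h2]; eapply rt_end; eauto. Qed.

Lemma edge_reach {A} B R (x y : A) : B x -> B y -> R x y -> reach B R x y.
Proof. intros; split; auto; apply rt_step; repeat split; auto. Qed.

Lemma reach_mono {A} (B B' : aset A) R a b : (forall x, B x -> B' x) -> reach B R a b -> reach B' R a b.
Proof.
  intros H [h1 h2]; split; auto. induction h2.
  - destruct H0 as [p [q r]]; apply rt_step; repeat split; auto.
  - apply rt_refl.
  - eapply rt_trans; eauto. apply IHh2_2. eapply rt_end; eauto.
Qed.

Lemma scc_sub {A} B R (a x : A) : scc B R a x -> B x.
Proof. intros [h _]; eapply reach_end; eauto. Qed.

Lemma scc_self {A} B R (a x : A) : scc B R a x -> scc B R a a.
Proof. intros [[h _] _]; split; apply reach_refl; auto. Qed.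

Lemma scc_mono {A} (B B' : aset A) R a x : (forall x, B x -> B' x) -> scc B R a x -> scc B' R a x.
Proof. intros H [h1 h2]; split; eapply reach_mono; eauto. Qed.

Lemma scc_lub_rt {A} (B B' : aset A) R a :
  (forall x, scc B R a x -> B' x) ->
  forall u v, clos_refl_trans A (edge B R) u v -> reach B R a u -> reach B R v a ->
  clos_refl_trans A (edge B' R) u v.
Proof.
  intros H u v Huv; induction Huv; intros h1 h2.
  - assert (Bx : B x) by (destruct H0 as [p _]; auto).
    assert (By : B y) by (destruct H0 as [_ [p _]]; auto).
    apply rt_step. destruct H0 as [_ [_ r]]. repeat split; auto; apply H; split; auto.
    + eapply reach_trans; [| exact h2]. apply edge_reach; auto.
    + eapply reach_trans; [exact h1|]. apply edge_reach; auto.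
  - apply rt_refl.
  - assert (By : B y) by (eapply rt_end; [| exact Huv1]; eapply reach_end; eauto).
    eapply rt_trans; [apply IHHuv1 | apply IHHuv2]; auto.
    + eapply reach_trans; [| exact h2]. split; auto.
    + eapply reach_trans; [exact h1|]. split; auto. eapply reach_end; eauto.
Qed.

Lemma scc_lub {A} (B B' : aset A) R a :
  (forall x, scc B R a x -> B' x) -> forall x, scc B R a x -> scc B' R a x.
Proof.
  intros H x Hx. assert (Ha := scc_self _ _ _ _ Hx). assert (Ba' : B' a) by auto.
  destruct Hx as [h1 h2]. assert (Bx' : B' x) by (apply H; split; auto).
  split; split; auto; eapply scc_lub_rt; eauto; try apply h1; try apply h2;
  try apply reach_refl; try (eapply reach_end; eauto); destruct Ha as [[]]; auto.
Qed.

Lemma scc_sym {A} B R (a x : A) : scc B R a x -> scc B R x a.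
Proof. intros [h1 h2]; split; auto. Qed.

Lemma scc_trans {A} B R (a x y : A) : scc B R a x -> scc B R x y -> scc B R a y.
Proof. intros [h1 h2] [h3 h4]; split; eapply reach_trans; eauto. Qed.
Lemma DeltaOp_mono {A} R (S D D' : aset A) : subset D D' -> subset (DeltaOp R S D) (DeltaOp R S D').
Proof.
  intros H x [b [Sb [Rb nr]]]. exists b; repeat split; auto. intro r; apply nr.
  eapply reach_mono; [| exact r]. intros y ny Dy; apply ny, H, Dy.
Qed.

Lemma Delta_fix {A} R (S : aset A) : subset (DeltaOp R S (Delta R S)) (Delta R S).
Proof.
  intros x Hx D HD. apply HD. eapply DeltaOp_mono; [| exact Hx].
  intros y Hy; apply Hy, HD.
Qed.

Lemma Delta_cf {A} R (S : aset A) x : conflict_free R S -> S x -> ~ Delta R S x.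
Proof.
  intros cf Sx HD.
  destruct (HD (fun x => exists b, S b /\ R b x)) as [b [Sb Rb]].
  - intros y [b [Sb [Rb _]]]; exists b; auto.
  - exact (cf b x Sb Sx Rb).
Qed.

Lemma K_in_c {A} R (S : aset A) a I lt c t :
  cseq R S a I lt c t -> ~ Delta R S a ->
  forall i, subset (scc (FminusDelta R S) R a) (c i).
Proof.
  intros [wf [tr [tri [tmax [z [suc [lim _]]]]]]] nDa.
  set (K := scc (FminusDelta R S) R a).
  intro i. induction i as [i IH] using (well_founded_induction wf).
  destruct (classic (exists j, lt j i)) as [[j0 hj0]|none].
  - destruct (classic (exists j, lt j i /\ forall k, lt k i -> k = j \/ lt k j)) as [[j [hj hk]]|nopred].
    + specialize (suc i j hj hk). intros x Kx. apply suc. unfold cstep.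
      eapply scc_lub; [| exact Kx]. intros y Ky. split.
      * apply (IH j hj); auto.
      * intros [_ [b [Sb [nb Rby]]]]. apply nb. apply (IH j hj).
        assert (nDy : ~ Delta R S y) by (apply scc_sub in Ky; auto).
        assert (r : reach (fun z => ~ Delta R S z) R y b).
        { apply NNPP; intro nr. apply nDy. apply Delta_fix. exists b; split; [|split]; auto. }
        assert (nDb : ~ Delta R S b) by exact (reach_end _ _ _ _ r).
        eapply scc_trans; [exact Ky|]. split; [exact r|].
        apply edge_reach; [exact nDb | exact nDy | exact Rby].
    + assert (H : set_eq (c i) (scc (fun x => forall j, lt j i -> c j x) R a)).
      { apply lim; [eauto|]. intros j hj. apply NNPP; intro n. apply nopred.
        exists j; split; auto. intros k hk.
        destruct (tri j k) as [h|[h|h]]; auto.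
        exfalso; apply n; eauto. }
      intros x Kx; apply H. eapply scc_lub; [|exact Kx].
      intros y Ky j hj; apply (IH j hj); auto.
  - assert (H : set_eq (c i) (scc (fun _ => True) R a)).
    { apply z. intros j hj; apply none; eauto. }
    intros x Kx; apply H. eapply scc_mono; [|exact Kx]; auto.
Qed.

Lemma ct_sub {A} R (S : aset A) a I lt c t :
  cseq R S a I lt c t -> c t a ->
  subset (c t) (scc (FminusDelta R S) R a).
Proof.
  intro Hc. pose proof Hc as [wf [tr [tri [tmax [z [suc [lim [fin _]]]]]]]].
  intro cta. destruct fin as [f|st]; [contradiction|].
  assert (ND : subset (Delta R S) (fun x => ~ c t x)).
  { intros x Dx. apply (Dx (fun x => ~ c t x)).
    intros y [b [Sb [Rby nr]]] cty. apply nr.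
    pose proof cty as cty'. apply st in cty. destruct cty as [h1 h2].
    assert (ctb : c t b).
    { apply NNPP; intro nb. destruct (reach_end _ _ _ _ h1) as [_ hd]. apply hd.
      split; auto. exists b; split; [|split]; auto. }
    apply st in ctb.
    eapply reach_mono; [| eapply reach_trans; [exact h2| apply ctb]].
    intros q [hq _] nq; auto. }
  intros x ctx. apply st in ctx. eapply scc_mono; [| exact ctx].
  intros q [hq _] Dq. apply (ND q Dq hq).
Qed.

Lemma ct_char {A} R (S : aset A) a I lt c t :
  cseq R S a I lt c t -> c t a -> ~ Delta R S a /\ c t = scc (FminusDelta R S) R a.
Proof.
  intros Hc cta. pose proof (ct_sub _ _ _ _ _ _ _ Hc cta) as h.
  assert (nD : ~ Delta R S a) by (apply h in cta; apply scc_sub in cta; auto).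
  split; auto. apply sub_antisym; auto. eapply K_in_c; eauto.
Qed.
Lemma K_back {A} (F : aset A) R a x y : scc F R a x -> scc F R x y -> scc F R a y.
Proof. apply scc_trans. Qed.
Lemma K_fwd {A} (F : aset A) R a x y : scc F R a y -> scc F R x y -> scc F R a x.
Proof. intros h1 h2. eapply scc_trans; [exact h1| apply scc_sym; exact h2]. Qed.
Lemma K_pair {A} (F : aset A) R a x y : scc F R a x -> scc F R a y -> scc F R x y.
Proof. intros h1 h2. eapply scc_trans; [apply scc_sym; exact h1| exact h2]. Qed.

Lemma range_in {A} (K : aset A) R T w : subset T K -> range K R T w -> K w.
Proof. intros h [h1|[y [_ [_ [e _]]]]]; auto. Qed.

Lemma stage_local {A} R (S : aset A) a :
  conflict_free R S -> stage (FminusDelta R S) (sccRestrict (FminusDelta R S) R) S ->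
  stage (scc (FminusDelta R S) R a) R (fun x => S x /\ scc (FminusDelta R S) R a x).
Proof.
  set (F := FminusDelta R S). set (K := scc F R a). intros cf [_ [_ st]].
  split; [intros x [_ h]; exact h|]. split; [intros x y [h _] [h' _]; apply cf; auto|].
  intros [T [TK [cfT [sub1 [w [rw nrw]]]]]]. apply st.
  exists (fun x => (S x /\ ~ K x) \/ T x). split; [|split].
  - intros x [[Sx _]|Tx]. + apply Delta_cf; auto. + exact (scc_sub _ _ _ _ (TK x Tx)).
  - intros x y Hx Hy [Rxy sxy].
    destruct Hx as [[Sx nKx]|Tx]; destruct Hy as [[Sy nKy]|Ty].
    + exact (cf x y Sx Sy Rxy).
    + apply nKx. exact (K_fwd _ _ _ _ _ (TK y Ty) sxy).
    + apply nKy. exact (K_back _ _ _ _ _ (TK x Tx) sxy).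
    + exact (cfT x y Tx Ty Rxy).
  - assert (conv : forall z, range K R T z -> range F (sccRestrict F R) (fun x => (S x /\ ~ K x) \/ T x) z).
    { intros z [Tz|[y [Ty [Ky [Kz Ryz]]]]]; [left; right; exact Tz|].
      right. exists y; split; [right; exact Ty|].
      split; [exact (scc_sub _ _ _ _ Ky)|]. split; [exact (scc_sub _ _ _ _ Kz)|].
      split; auto. exact (K_pair _ _ _ _ _ Ky Kz). }
    split.
      * intros z [Sz|[y [Sy [Fy [Fz [Ryz syz]]]]]].
        -- destruct (classic (K z)) as [Kz|nKz].
           ++ apply conv, sub1. left; split; auto.
           ++ left; left; auto.
        -- destruct (classic (K z)) as [Kz|nKz].
           ++ assert (Ky : K y) by exact (K_fwd _ _ _ _ _ Kz syz).
              apply conv, sub1. right. exists y. split; [split; auto|]. split; [|split; [|try split]]; auto.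
           ++ right. exists y. split.
              ** left; split; auto. intro Ky. apply nKz. exact (K_back _ _ _ _ _ Ky syz).
              ** split; [|split; [|try split]]; auto.
      * exists w. split; [apply conv; exact rw|].
        assert (Kw : K w) by exact (range_in _ _ _ _ TK rw).
        intros [Sw|[y [Sy [Fy [Fw [Ryw syw]]]]]].
        -- apply nrw. left; split; auto.
        -- apply nrw. right. exists y. assert (Ky : K y) by exact (K_fwd _ _ _ _ _ Kw syw).
           split; [split; auto|]. split; [|split; [|try split]]; auto.
Qed.

Lemma stage_global {A} R (S : aset A) :
  conflict_free R S ->
  (forall a, ~ Delta R S a -> stage (scc (FminusDelta R S) R a) R (fun x => S x /\ scc (FminusDelta R S) R a x)) ->
  stage (FminusDelta R S) (sccRestrict (FminusDelta R S) R) S.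
Proof.
  set (F := FminusDelta R S). intros cf H.
  split; [intros x Sx; apply Delta_cf; auto|].
  split; [intros x y Sx Sy [Rxy _]; exact (cf x y Sx Sy Rxy)|].
  intros [T [TF [cfT [sub1 [w [rw nrw]]]]]].
  assert (Fw : F w) by (destruct rw as [Tw|[y [_ [_ [h _]]]]]; auto).
  set (K := scc F R w).
  assert (Kw : K w) by (split; apply reach_refl; exact Fw).
  apply (H w Fw). exists (fun x => T x /\ K x). split; [|split].
  - intros x [_ h]; exact h.
  - intros x y [Tx Kx] [Ty Ky] Rxy. apply (cfT x y Tx Ty). split; auto. exact (K_pair _ _ _ _ _ Kx Ky).
  - assert (back : forall z, K z -> range F (sccRestrict F R) T z -> range K R (fun x => T x /\ K x) z).
    { intros z Kz [Tz|[y [Ty [Fy [Fz [Ryz syz]]]]]]; [left; split; auto|].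
      assert (Ky : K y) by exact (K_fwd _ _ _ _ _ Kz syz).
      right. exists y. split; [split; auto|]. split; [|split; [|try split]]; auto. }
    split.
      * intros z [[Sz Kz]|[y [[Sy Ky] [_ [Kz Ryz]]]]]; apply back; auto; apply sub1.
        -- left; auto.
        -- right. exists y. split; auto. split; [exact (scc_sub _ _ _ _ Ky)|].
           split; [exact (scc_sub _ _ _ _ Kz)|]. split; auto. exact (K_pair _ _ _ _ _ Ky Kz).
      * exists w. split; [apply back; auto|].
        intros [[Sw _]|[y [[Sy Ky] [_ [_ Ryw]]]]]; apply nrw.
        -- left; auto.
        -- right. exists y. split; auto. split; [exact (scc_sub _ _ _ _ Ky)|].
           split; auto. split; auto. exact (K_pair _ _ _ _ _ Ky Kw).
Qed.
Inductive tower {A} (R : A -> A -> Prop) (S : aset A) (w : A) : aset A -> Prop :=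
| tw_f X : tower R S w X -> tower R S w (cstep R S w X)
| tw_g (P : aset A -> Prop) : (forall X, P X -> tower R S w X) ->
    tower R S w (scc (fun x => forall X, P X -> X x) R w).

Lemma tower_form {A} R (S : aset A) w X : tower R S w X -> exists B, X = scc B R w.
Proof. intro H; destruct H; eexists; reflexivity. Qed.

Lemma f_sub {A} R (S : aset A) w X : subset (cstep R S w X) X.
Proof. intros x h. apply scc_sub in h. apply h. Qed.

Lemma g_sub {A} R (w : A) (P : aset A -> Prop) Z : P Z -> subset (scc (fun x => forall X, P X -> X x) R w) Z.
Proof. intros PZ x h. apply scc_sub in h. apply h, PZ. Qed.

Lemma t_lub {A} R (S : aset A) w X (P : aset A -> Prop) : tower R S w X ->
  (forall Z, P Z -> subset X Z) -> subset X (scc (fun x => forall X, P X -> X x) R w).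
Proof.
  intros HX H. destruct (tower_form _ _ _ _ HX) as [B ->].
  intros x hx. apply (scc_lub B _ R w); [|exact hx]. intros y hy Z PZ. apply (H Z PZ y hy).
Qed.

Definition extreme {A} R (S : aset A) w X :=
  forall Y, tower R S w Y -> subset X Y -> X <> Y -> subset X (cstep R S w Y).

Lemma sub_refl {A} (X : aset A) : subset X X.
Proof. intros x h; exact h. Qed.
Lemma sub_tr {A} (X Y Z : aset A) : subset X Y -> subset Y Z -> subset X Z.
Proof. intros h1 h2 x h; auto. Qed.

Lemma t_M {A} R (S : aset A) w X : extreme R S w X -> tower R S w X ->
  forall Y, tower R S w Y -> subset X Y \/ subset Y (cstep R S w X).
Proof.
  intros ex HX Y HY. induction HY as [Y HY IH|P HP IH].
  - destruct IH as [h|h].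
    + destruct (classic (X = Y)) as [e|ne].
      * subst; right; apply sub_refl.
      * left; apply ex; auto.
    + right. eapply sub_tr; [apply f_sub| exact h].
  - destruct (classic (exists Z, P Z /\ subset Z (cstep R S w X))) as [[Z [PZ h]]|n].
    + right. eapply sub_tr; [apply g_sub; exact PZ| exact h].
    + left. apply (t_lub R S); auto. intros Z PZ. destruct (IH Z PZ); auto.
      exfalso; apply n; eauto.
Qed.

Lemma t_ext {A} R (S : aset A) w X : tower R S w X -> extreme R S w X.
Proof.
  intro HX. induction HX as [X HX IH|P HP IH].
  - intros Y HY sub ne. destruct (t_M _ _ _ _ IH HX Y HY) as [h|h].
    + destruct (classic (X = Y)) as [e|ne'].
      * subst; apply sub_refl.
      * eapply sub_tr; [apply f_sub| apply IH; auto].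
    + exfalso; apply ne; apply sub_antisym; auto.
  - intros Y HY sub ne.
    destruct (classic (exists Z, P Z /\ ~ subset Y Z)) as [[Z [PZ nh]]|n].
    + destruct (t_M _ _ _ _ (IH Z PZ) (HP Z PZ) Y HY) as [h|h].
      * eapply sub_tr; [apply g_sub; exact PZ|]. apply (IH Z PZ); auto.
        intro e; subst; apply nh, sub_refl.
      * exfalso; apply nh. eapply sub_tr; [exact h| apply f_sub].
    + exfalso; apply ne; apply sub_antisym; auto. apply (t_lub R S); auto.
      intros Z PZ. apply NNPP; intro h; apply n; eauto.
Qed.

Lemma t_chain {A} R (S : aset A) w X Y : tower R S w X -> tower R S w Y -> subset X Y \/ subset Y X.
Proof.
  intros HX HY. destruct (t_M _ _ _ _ (t_ext _ _ _ _ HX) HX Y HY) as [h|h]; auto.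
  right; eapply sub_tr; [exact h | apply f_sub].
Qed.

Lemma t_fixmax {A} R (S : aset A) w X : tower R S w X -> cstep R S w X = X ->
  forall Y, tower R S w Y -> subset X Y.
Proof.
  intros HX fx Y HY. induction HY as [Y HY IH|P HP IH].
  - destruct (classic (X = Y)) as [e|ne].
    + subst. rewrite fx; apply sub_refl.
    + apply (t_ext _ _ _ _ HX); auto.
  - apply (t_lub R S); auto.
Qed.

Lemma t_least {A} R (S : aset A) w (Q : aset A -> Prop) :
  (exists Z, Q Z /\ tower R S w Z) ->
  exists m, Q m /\ tower R S w m /\ forall Z, Q Z -> tower R S w Z -> subset Z m.
Proof.
  intros [Z0 [QZ0 TZ0]].
  set (L := fun Y => tower R S w Y /\ forall Z, Q Z -> tower R S w Z -> subset Z Y).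
  set (m := scc (fun x => forall X, L X -> X x) R w).
  assert (Tm : tower R S w m) by (apply tw_g; intros X [h _]; exact h).
  assert (Lm : forall Z, Q Z -> tower R S w Z -> subset Z m).
  { intros Z QZ TZ. apply (t_lub R S); auto. intros Y [_ h]; apply h; auto. }
  destruct (classic (Q m)) as [Qm|nQm]; [exists m; auto|].
  exfalso.
  assert (Lf : L (cstep R S w m)).
  { split; [apply tw_f; auto|]. intros Z QZ TZ. apply (t_ext _ _ _ _ TZ); auto.
    intro e; subst; contradiction. }
  assert (fm : cstep R S w m = m).
  { apply sub_antisym; [apply f_sub|]. apply g_sub; exact Lf. }
  assert (e : m = Z0).
  { apply sub_antisym; [apply (t_fixmax _ _ _ _ Tm fm); auto| apply Lm; auto]. }
  apply nQm; rewrite e; exact QZ0.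
Qed.
Lemma exists_cseq {A} R (S : aset A) w :
  exists (I : Type) (lt : I -> I -> Prop) (c : I -> aset A) (t : I), cseq R S w I lt c t.
Proof.
  set (I := {X : aset A | tower R S w X}).
  set (lt := fun i j : I => subset (proj1_sig j) (proj1_sig i) /\ proj1_sig j <> proj1_sig i).
  set (top := scc (fun x => forall X, tower R S w X -> X x) R w).
  assert (Ttop : tower R S w top) by (apply tw_g; auto).
  assert (topmin : forall Y, tower R S w Y -> subset top Y).
  { intros Y HY. apply g_sub. exact HY. }
  assert (sigeq : forall i j : I, proj1_sig i = proj1_sig j -> i = j).
  { intros [X hX] [Y hY] e; simpl in e; subst. f_equal; apply proof_irrelevance. }
  exists I, lt, (@proj1_sig _ _), (exist _ top Ttop).
  split; [|split; [|split; [|split; [|split; [|split; [|split; [|split]]]]]]].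
  -
    intro i. apply NNPP; intro nacc.
    destruct (t_least R S w (fun X => exists h : tower R S w X, ~ Acc lt (exist _ X h)))
      as [m [[hm nm] [_ mmin]]].
    { destruct i as [X hX]. exists X; split; [exists hX; exact nacc| exact hX]. }
    apply nm. constructor. intros [Y hY] [sub ne]. simpl in *.
    apply NNPP; intro nY. apply ne. apply sub_antisym; auto.
    apply mmin; auto. exists hY; exact nY.
  - intros i j k [s1 n1] [s2 n2]. split; [eapply sub_tr; eauto|].
    intro e. apply n1. rewrite e in s2. apply sub_antisym; auto.
  - intros [X hX] [Y hY]. destruct (classic (X = Y)) as [e|ne].
    + right; left; apply sigeq; exact e.
    + destruct (t_chain _ _ _ _ _ hX hY) as [h|h].
      * right; right. split; auto.
      * left. split; auto.
  - intros [X hX]. destruct (classic (top = X)) as [e|ne].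
    + left; apply sigeq; simpl; auto.
    + right. split; [apply topmin; auto| auto].
  - intros [X hX] nolt. simpl.
    set (z := scc (fun x => forall X : aset A, False -> X x) R w).
    assert (Tz : tower R S w z) by (apply tw_g; intros ? [] ).
    assert (e : X = z).
    { apply NNPP; intro ne. apply (nolt (exist _ z Tz)). split; auto. simpl.
      destruct (tower_form _ _ _ _ hX) as [B ->]. intros x hx.
      eapply scc_mono; [| exact hx]. intros; contradiction. }
    subst X. intro x; split; intro h; eapply scc_mono; try exact h; simpl; auto.
    intros; contradiction.
  - intros [X hX] [Y hY] [sub ne] hk. simpl in *.
    assert (Tf : tower R S w (cstep R S w Y)) by (apply tw_f; auto).
    assert (e : X = cstep R S w Y).
    { apply NNPP; intro nf.
      assert (sf : subset X (cstep R S w Y)) by (apply (t_ext _ _ _ _ hX); auto).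
      destruct (hk (exist _ _ Tf)) as [h|[h2 h3]].
      - split; auto.
      - inversion h. apply ne. apply sub_antisym; auto.
        apply (t_fixmax _ _ _ _ hY); auto.
      - simpl in *. apply h3. apply sub_antisym; auto. apply f_sub. }
    rewrite e; intro x; tauto.
  - intros [X hX] _ nopred. simpl.
    set (P := fun Z => tower R S w Z /\ subset X Z /\ Z <> X).
    assert (TP : tower R S w (scc (fun x => forall Z, P Z -> Z x) R w)) by (apply tw_g; intros Z [h _]; exact h).
    assert (e : X = scc (fun x => forall Z, P Z -> Z x) R w).
    { apply NNPP; intro ne.
      assert (sX : subset X (scc (fun x => forall Z, P Z -> Z x) R w)).
      { apply (t_lub R S); auto. intros Z [_ [h _]]; exact h. }
      destruct (nopred (exist _ _ TP)) as [[K hK] [[s1 n1] [s2 n2]]].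
      - split; auto.
      - simpl in *. apply n1. apply sub_antisym; auto. apply g_sub. split; auto. }
    intro x; split; intro h.
    + rewrite e in h. eapply scc_mono; [| exact h]. intros y hy [Z hZ] [s n]. apply hy. split; auto.
    + rewrite e. eapply scc_mono; [| exact h]. intros y hy Z [hZ [s n]]. exact (hy (exist _ Z hZ) (conj s (fun e => n (eq_sym e)))).
  - right. simpl. assert (e : cstep R S w top = top).
    { apply sub_antisym; [apply f_sub| apply topmin; apply tw_f; auto]. }
    rewrite e; intro; tauto.
  - intros [X hX] [s n]. simpl in *.
    assert (ns : cstep R S w X <> X).
    { intro fx. apply n. apply sub_antisym; auto. apply (t_fixmax _ _ _ _ hX fx). auto. }
    split.
    + apply NNPP; intro nw. apply ns. apply sub_antisym; [apply f_sub|].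
      intros x hx. exfalso. destruct (tower_form _ _ _ _ hX) as [B e]. rewrite e in hx.
      apply nw. rewrite e. exact (scc_self _ _ _ _ hx).
    + intro se. apply ns. apply set_ext. exact se.
Qed.
Theorem theorem9 (A : Type) (R : A -> A -> Prop) (S : A -> Prop) :
  tfstg2 R S <->
  (conflict_free R S /\
   stage (FminusDelta R S) (sccRestrict (FminusDelta R S) R) S).
Proof.
  split.
  - intros [cf H]. split; auto. apply stage_global; auto.
    intros a nDa. destruct (exists_cseq R S a) as [I [lt [c [t Hc]]]].
    assert (cta : c t a).
    { apply (K_in_c _ _ _ _ _ _ _ Hc nDa t). split; apply reach_refl; exact nDa. }
    destruct (ct_char _ _ _ _ _ _ _ Hc cta) as [_ e].
    destruct (H a I lt c t Hc) as [h|h]; [contradiction|]. rewrite <- e. exact h.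
  - intros [cf st]. split; auto. intros a I lt c t Hc.
    destruct (classic (c t a)) as [cta|n]; [|left; exact n].
    right. destruct (ct_char _ _ _ _ _ _ _ Hc cta) as [_ e]. rewrite e.
    apply stage_local; auto.
Qed.
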